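(* Let $n$ be a positive integer, let $\mathcal{K}$ be a finite subset of $\mathbb{Z}_+^n$ containing $\mathbf{0}=(0,\ldots,0)$, and let $(s_{\mathbf{k}})_{\mathbf{k}\in\mathcal{K}}$ be complex numbers. There exists a (non-negative) measure $\mu$ on the Borel $\sigma$-algebra $\mathfrak{B}(\mathbb{C}^n)$ such that $$\int_{\mathbb{C}^n} \mathbf{z}^{\mathbf{k}}\, d\mu(\mathbf{z}) = s_{\mathbf{k}}\qquad \text{for all } \mathbf{k}\in\mathcal{K}$$ if and only if one of the following conditions holds: (a) $s_{\mathbf{0}}>0$; (b) $s_{\mathbf{k}}=0$ for all $\mathbf{k}\in\mathcal{K}$. Moreover, if one of conditions (a), (b) is satisfied, then there exists such a measure $\mu$ with compact support.
   Context: $\mathbb{Z}_+$ denotes the set of non-negative integers. For $\mathbf{k}=(k_1,\ldots,k_n)\in\mathbb{Z}_+^n$ and $\mathbf{z}=(z_1,\ldots,z_n)\in\mathbb{C}^n$, $\mathbf{z}^{\mathbf{k}}$ denotes the monomial $z_1^{k_1}\cdots z_n^{k_n}$ (no complex conjugates appear). A measure here means a non-negative measure on the Borel sets of $\mathbb{C}^n$, with respect to which the monomials $\mathbf{z}^{\mathbf{k}}$, $\mathbf{k}\in\mathcal{K}$, are integrable. *)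

(* Defs.v *)
From HB Require Import structures.
From mathcomp Require Import all_boot all_order all_algebra.
From mathcomp Require Import complex.
From mathcomp Require Import all_classical all_reals all_analysis.
Set Implicit Arguments. Unset Strict Implicit. Unset Printing Implicit Defensive.
Import Order.TTheory GRing.Theory Num.Theory.
Import numFieldTopology.Exports.
Local Open Scope ring_scope.
Local Open Scope classical_set_scope.

(** C^n is represented as R^n x R^n (real parts, imaginary parts), with the
    Euclidean (product) topology; a point p corresponds to the vector
    z = (p.1 0 i + i * p.2 0 i)_i of complex numbers in R[i]. *)
Definition Cn (R : realType) (n : nat) : topologicalType :=
  ('rV[R]_n * 'rV[R]_n)%type.

Definition CnB (R : realType) (n : nat) := g_sigma_algebraType (@open (Cn R n)).

Definition zcoord (R : realType) (n : nat) (p : Cn R n) (i : 'I_n) : R[i] :=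
  (p.1 0 i +i* p.2 0 i)%C.

Definition monomial (R : realType) (n : nat) (k : 'I_n -> nat) (p : Cn R n) : R[i] :=
  \prod_(i < n) zcoord p i ^+ k i.

Definition cintegrable (R : realType) (n : nat)
    (mu : {measure set (CnB R n) -> \bar R}) (f : CnB R n -> R[i]) : Prop :=
  mu.-integrable setT (fun p => (complex.Re (f p))%:E) /\
  mu.-integrable setT (fun p => (complex.Im (f p))%:E).

Definition cintegral (R : realType) (n : nat)
    (mu : {measure set (CnB R n) -> \bar R}) (f : CnB R n -> R[i]) : R[i] :=
  (fine (\int[mu]_p (complex.Re (f p))%:E) +i*
   fine (\int[mu]_p (complex.Im (f p))%:E))%C.

Definition has_moments (R : realType) (n : nat)
    (mu : {measure set (CnB R n) -> \bar R})
    (K : set ('I_n -> nat)) (s : ('I_n -> nat) -> R[i]) : Prop :=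
  forall k, K k ->
    cintegrable mu (monomial k) /\ cintegral mu (monomial k) = s k.

Definition compact_support (R : realType) (n : nat)
    (mu : {measure set (CnB R n) -> \bar R}) : Prop :=
  exists C : set (Cn R n), compact C /\ mu (~` C) = 0%E.

(* Main.v *)
Require Import Defs.
From HB Require Import structures.
From mathcomp Require Import all_boot all_order all_algebra.
From mathcomp Require Import complex.
From mathcomp Require Import all_classical all_reals all_analysis.
From mathcomp Require Import measurable_realfun.
From mathcomp Require cyclic cyclotomic separable.
From mathcomp Require Import ring.
Import Order.TTheory GRing.Theory Num.Theory.
Import numFieldTopology.Exports.
Local Open Scope ring_scope.
Local Open Scope classical_set_scope.
Local Notation cRe := (@complex.Re _).
Local Notation cIm := (@complex.Im _).

Section OneVar.
Variable R : rcfType.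
Local Notation C := R[i].

Definition mom (L : seq (R * C)) (m : nat) : C :=
  \sum_(x <- L) (x.1%:C)%C * x.2 ^+ m.

Lemma geom0 (a : C) d : a ^+ d = 1 -> a != 1 -> \sum_(j < d) a ^+ j = 0.
Proof.
move=> ad a1.
have h : (a - 1) * \sum_(j < d) a ^+ j = a ^+ d - 1.
  elim: d {ad} => [|d IH]; first by rewrite big_ord0 mulr0 expr0 subrr.
  rewrite big_ord_recr /= mulrDr IH exprS; ring.
move: h; rewrite ad subrr => /eqP; rewrite mulf_eq0 subr_eq0 (negbTE a1) /=.
by move/eqP.
Qed.

Lemma prim_exists d : (0 < d)%N -> exists w : C, d.-primitive_root w.
Proof.
pose p : {poly C} := 'X^d - 1; have [r Dp] := closed_field_poly_normal p.
move=> d_gt0; rewrite (monicP _) ?monicXnsubC // scale1r in Dp.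
have rn1: all d.-unity_root r by apply/allP=> z; rewrite -root_prod_XsubC -Dp.
have sz_r: (d < (size r).+1)%N.
  by rewrite -(size_prod_XsubC r id) -Dp size_XnsubC.
have [|z] := hasP (cyclic.has_prim_root d_gt0 rn1 _ sz_r); last by exists z.
by rewrite -separable.separable_prod_XsubC -Dp cyclotomic.separable_Xn_sub_1 // pnatr_eq0 -lt0n.
Qed.

Definition halve (L : seq (R * C)) := [seq (x.1 / 2, x.2) | x <- L].

Lemma mom_halve L m : mom (halve L) m = mom L m / 2.
Proof.
rewrite /mom big_map mulr_suml; apply: eq_bigr => x _ /=.
by rewrite rmorphM fmorphV rmorph_nat mulrAC.
Qed.

Lemma sum_halve L : \sum_(x <- halve L) x.1 = (\sum_(x <- L) x.1) / 2.
Proof. by rewrite big_map mulr_suml. Qed.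

Lemma all_halve L : all (fun x => 0 <= x.1) L -> all (fun x => 0 <= x.1) (halve L).
Proof.
move=> /allP H; apply/allP => y /mapP [x xL ->] /=.
by rewrite divr_ge0 // ?H // ler0n.
Qed.

Lemma mom_cat L1 L2 m : mom (L1 ++ L2) m = mom L1 m + mom L2 m.
Proof. by rewrite /mom big_cat. Qed.

Definition mix (L1 L2 : seq (R * C)) : seq (R * C) := halve L1 ++ halve L2.

Lemma mom_mix L1 L2 m : mom (mix L1 L2) m = mom L1 m / 2 + mom L2 m / 2.
Proof. by rewrite /mix mom_cat !mom_halve. Qed.

Lemma sum_mix L1 L2 : \sum_(x <- mix L1 L2) x.1 =
  (\sum_(x <- L1) x.1) / 2 + (\sum_(x <- L2) x.1) / 2.
Proof. by rewrite /mix big_cat !sum_halve. Qed.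

Lemma all_mix L1 L2 : all (fun x => 0 <= x.1) L1 -> all (fun x => 0 <= x.1) L2 ->
  all (fun x => 0 <= x.1) (mix L1 L2).
Proof. by move=> h1 h2; rewrite /mix all_cat !all_halve. Qed.

Definition rootsL d (z w : C) : seq (R * C) := [seq ((d%:R : R)^-1, z * w ^+ j) | j <- index_iota 0 d].

Lemma rootsL_mom d z w m : d.-primitive_root w ->
  mom (rootsL d z w) m = (d%:R)^-1 * (z ^+ m * \sum_(j < d) (w ^+ m) ^+ j).
Proof.
move=> pw; rewrite /mom /rootsL big_map big_mkord mulr_sumr mulr_sumr.
apply: eq_bigr => j _ /=; rewrite fmorphV rmorph_nat; congr (_ * _).
by rewrite exprMn -!exprM mulnC.
Qed.

Lemma rootsL_low d z w m : d.-primitive_root w -> (0 < m < d)%N ->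
  mom (rootsL d z w) m = 0.
Proof.
move=> pw /andP [m0 md]; rewrite rootsL_mom // geom0 ?mulr0 //.
  by rewrite exprAC (prim_expr_order pw) expr1n.
by rewrite -(prim_order_dvd pw) gtnNdvd.
Qed.

Lemma rootsL_top d z w : (0 < d)%N -> d.-primitive_root w ->
  mom (rootsL d z w) d = z ^+ d.
Proof.
move=> d0 pw; rewrite rootsL_mom // (prim_expr_order pw).
rewrite (eq_bigr (fun _ => 1)) => [|j _]; last by rewrite expr1n.
rewrite sumr_const card_ord mulrCA mulVf ?mulr1 //.
by rewrite pnatr_eq0 -lt0n.
Qed.

Lemma rootsL_sum d z w : (0 < d)%N -> \sum_(x <- rootsL d z w) x.1 = 1.
Proof.
move=> d0; rewrite big_map big_mkord sumr_const card_ord -mulr_natr.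
have hd : (d%:R : R) != 0 by rewrite pnatr_eq0 -lt0n.
by field.
Qed.

Lemma rootsL_all d z w : all (fun x => 0 <= x.1) (rootsL d z w).
Proof. by apply/allP => y /mapP [j _ ->] /=; rewrite invr_ge0 ler0n. Qed.

Lemma onevar D (t : nat -> C) : exists L : seq (R * C),
  [/\ all (fun x => 0 <= x.1) L, \sum_(x <- L) x.1 = 1 &
      forall m, (0 < m <= D)%N -> mom L m = t m].
Proof.
elim: D t => [|D IH] t.
  exists [:: (1, 0)]; split => /=; first by rewrite ler01.
    by rewrite big_cons big_nil addr0.
  by move=> m /andP [m0 m1]; move: (leq_trans m0 m1).
have [L0 [L0p L0s L0m]] := IH (fun m => 2%:R * t m).
pose d := D.+1; pose c := 2%:R * t d - mom L0 d.
have d0 : (0 < d)%N by [].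
pose z := d.-root c.
have [w pw] := @prim_exists d d0.
exists (mix L0 (rootsL d z w)); split.
- by rewrite all_mix // rootsL_all.
- by rewrite sum_mix L0s (@rootsL_sum d z w d0) /= -splitr.
move=> m /andP [m0]; rewrite leq_eqVlt => /orP [/eqP ->|mD].
  rewrite mom_mix (@rootsL_top d z w d0 pw) rootCK // /c; by field.
rewrite mom_mix (@rootsL_low d z w m pw) ?m0 // L0m ?m0 //; by field.
Qed.
End OneVar.

Section Meas.
Variables (R : realType) (n : nat).
Local Notation T := (CnB R n).

Lemma coord1_cont (i : 'I_n) : continuous (fun p : Cn R n => p.1 0 i).
Proof.
move=> p. apply: (@continuous_comp _ _ _ fst (fun M : 'rV[R]_n => M 0 i)).
 exact: cvg_fst. exact: coord_continuous.
Qed.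

Lemma coord2_cont (i : 'I_n) : continuous (fun p : Cn R n => p.2 0 i).
Proof.
move=> p. apply: (@continuous_comp _ _ _ snd (fun M : 'rV[R]_n => M 0 i)).
 exact: cvg_snd. exact: coord_continuous.
Qed.

Lemma cont_meas (f : Cn R n -> R) : continuous f -> measurable_fun [set: T] (f : T -> R).
Proof.
move=> cf; apply: (measurability _ (measurable_realfun.RGenOpens.measurableE R)).
move=> _ [_ [a [b ->] <-]]. apply: sub_sigma_algebra. rewrite setTI.
move/continuousP: cf; apply. exact: interval_open.
Qed.

Definition cmeas (f : T -> R[i]) : Prop :=
  and (measurable_fun setT (fun p => cRe (f p)))
  (measurable_fun setT (fun p => cIm (f p))).

Lemma cmeas_cst c : cmeas (fun _ => c).
Proof. by split; exact: measurable_cst. Qed.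

Lemma cmeas_mul f g : cmeas f -> cmeas g -> cmeas (fun p => f p * g p).
Proof.
move=> [f1 f2] [g1 g2]; split.
  have -> : (fun p => cRe (f p * g p)) =
    ((fun p => cRe (f p)) \* (fun p => cRe (g p))) \-
    ((fun p => cIm (f p)) \* (fun p => cIm (g p))).
    by apply: funext => p /=; case: (f p) => a b; case: (g p).
  by apply: measurable_funB; apply: measurable_funM.
have -> : (fun p => cIm (f p * g p)) =
  ((fun p => cRe (f p)) \* (fun p => cIm (g p))) \+
  ((fun p => cIm (f p)) \* (fun p => cRe (g p))).
  by apply: funext => p /=; case: (f p) => a b; case: (g p).
by apply: measurable_funD; apply: measurable_funM.
Qed.

Lemma cmeas_prod (I : Type) (r : seq I) (F : I -> T -> R[i]) :
  (forall i, cmeas (F i)) -> cmeas (fun p => \prod_(i <- r) F i p).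
Proof.
move=> HF; elim: r => [|i r IH].
  have -> : (fun p : T => \prod_(i <- [::]) F i p) = (fun _ => 1).
    by apply: funext => p; rewrite big_nil.
  exact: cmeas_cst.
have -> : (fun p : T => \prod_(j <- i :: r) F j p) =
   (fun p => F i p * \prod_(j <- r) F j p).
  by apply: funext => p; rewrite big_cons.
exact: cmeas_mul.
Qed.

Lemma cmeas_exp f m : cmeas f -> cmeas (fun p => f p ^+ m).
Proof.
move=> hf; elim: m => [|m IH].
  have -> : (fun p : T => f p ^+ 0) = (fun _ => 1) by apply: funext => p; rewrite expr0.
  exact: cmeas_cst.
have -> : (fun p : T => f p ^+ m.+1) = (fun p => f p * f p ^+ m).
  by apply: funext => p; rewrite exprS.
exact: cmeas_mul.
Qed.

Lemma cmeas_zcoord i : cmeas (fun p : T => zcoord p i).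
Proof.
split.
  apply: cont_meas; exact: coord1_cont.
apply: cont_meas; exact: coord2_cont.
Qed.

Lemma cmeas_monomial k : cmeas (monomial k : T -> R[i]).
Proof.
rewrite /monomial; apply: cmeas_prod => i; apply: cmeas_exp; exact: cmeas_zcoord.
Qed.
End Meas.
Arguments cmeas {R n} f.
Arguments cmeas_monomial {R n} k.
Section AMU.
Variables (R : realType) (n : nat).
Local Notation T := (CnB R n).

Fixpoint amu (L : seq ({nonneg R} * T)) : {measure set T -> \bar R} :=
  match L with
  | [::] => @mzero _ T R
  | x :: L' => measure_add (mscale x.1 (@dirac _ T x.2 R)) (amu L')
  end.

Lemma amu_ge0 (L : seq ({nonneg R} * T)) (g : T -> R) :
  (forall x, 0 <= g x) -> measurable_fun setT g ->
  (\int[amu L]_x (g x)%:E = (\sum_(x <- L) x.1%:num * g x.2)%:E)%E.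
Proof.
move=> g0 mg; elim: L => [|x L IH] /=.
  by rewrite integral_measure_zero big_nil.
have mgE : measurable_fun setT (fun x => (g x)%:E) by exact/measurable_EFinP.
rewrite ge0_integral_measure_add //; last by move=> y _; rewrite lee_fin.
rewrite IH ge0_integral_mscale //; last by move=> y _; rewrite lee_fin.
rewrite integral_dirac //.
by rewrite diracE mem_set // mul1e big_cons EFinD EFinM.
Qed.

Lemma amu_int (L : seq ({nonneg R} * T)) (f : T -> R) :
  measurable_fun setT f ->
  (amu L).-integrable setT (EFin \o f) /\
  (\int[amu L]_x (f x)%:E = (\sum_(x <- L) x.1%:num * f x.2)%:E)%E.
Proof.
move=> mf; split.
  apply/integrableP; split; first exact/measurable_EFinP.
  rewrite (_ : (fun x => `|(EFin \o f) x|%E) = (fun x => (`|f x|)%:E)); last first.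
    by apply: funext => x.
  rewrite amu_ge0 //; first exact: ltry.
  exact: measurableT_comp (@normr_measurable _ _) mf.
rewrite integralE.
rewrite (_ : ((fun x => (f x)%:E)^\+)%E = EFin \o f^\+); last exact: funerpos.
rewrite (_ : ((fun x => (f x)%:E)^\-)%E = EFin \o f^\-); last exact: funerneg.
rewrite !amu_ge0 //; try (by move=> ?; exact: funrpos_ge0); try (by move=> ?; exact: funrneg_ge0);
  try exact: measurable_funrpos; try exact: measurable_funrneg.
rewrite -EFinB -sumrB; congr (_%:E); apply: eq_bigr => x _.
rewrite -mulrBr; congr (_ * _).
by have := congr1 (fun h => h x.2) (funrposBneg f).
Qed.

Lemma amu_null (L : seq ({nonneg R} * T)) (C : set T) :
  (forall x, x \in L -> C x.2) -> amu L (~` C) = 0%E.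
Proof.
elim: L => [|x L IH] HC; first by [].
rewrite [amu _ _]measure_addE IH; last by move=> y yL; apply: HC; rewrite inE yL orbT.
rewrite adde0; change ((x.1%:num)%:E * \d_(x.2) (~` C) = 0)%E.
rewrite diracE memNset ?mule0 //.
move=> H; apply: H; apply: (HC x); exact: mem_head.
Qed.

Lemma amu_compact (L : seq ({nonneg R} * T)) : compact_support (amu L).
Proof.
exists [set` map snd L]; split.
  apply: (@finite_compact (Cn R n)); exact: finite_seq.
apply: amu_null => x xL /=; exact: map_f.
Qed.


Lemma realc_mul (w a b : R) : ((w%:C) * (a +i* b))%C = ((w * a) +i* (w * b))%C.
Proof. by apply/eqP; rewrite eq_complex /= !mul0r subr0 addr0 !eqxx. Qed.

Lemma amu_moment (L : seq ({nonneg R} * T)) (f : T -> R[i]) : cmeas f ->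
  cintegrable (amu L) f /\
  cintegral (amu L) f = \sum_(x <- L) ((x.1%:num)%:C)%C * f x.2.
Proof.
move=> [m1 m2]; have [i1 e1] := amu_int L _ m1; have [i2 e2] := amu_int L _ m2.
split; first by split.
rewrite /cintegral e1 e2 /=.
clear i1 e1 i2 e2; elim: L => [|x L IH]; first by rewrite !big_nil.
rewrite !big_cons -IH.
by case: (f x.2) => a b; rewrite realc_mul.
Qed.

End AMU.

Section Moment.
Variables (R : realType) (n : nat).
Local Notation T := (CnB R n).

Lemma forward (K : set ('I_n -> nat)) (s : ('I_n -> nat) -> R[i])
  (mu : {measure set T -> \bar R}) :
  K (fun _ => 0%N) -> has_moments mu K s ->
  0 < s (fun _ => 0%N) \/ (forall k, K k -> s k = 0).
Proof.
move=> hK0 H; have [[ci1 ci2] ce] := H _ hK0.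
have m1 : forall p : Cn R n, monomial (fun _ : 'I_n => 0%N) p = 1.
  by move=> p; rewrite /monomial; apply: big1 => i _; rewrite expr0.
have I1 : (\int[mu]_p (cRe (monomial (fun _ : 'I_n => 0%N) p))%:E = mu setT)%E.
  rewrite -[RHS]mul1e -integral_cst //; apply: eq_integral => p _; by rewrite m1.
have I2 : (\int[mu]_p (cIm (monomial (fun _ : 'I_n => 0%N) p))%:E = 0)%E.
  rewrite (eq_integral (cst 0%E)) ?integral0 // => p _; by rewrite m1.
have muT : (mu setT < +oo)%E.
  move/integrableP: ci1 => [_]; rewrite (eq_integral (cst 1%E)) ?integral_cst ?mul1e //.
  by move=> p _; rewrite m1 /= normr1.
move: ce; rewrite /cintegral I1 I2 => ce.

have [mu0|mupos] := eqVneq (mu setT) 0%E.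
  right => k Kk; have [[c1 c2] <-] := H _ Kk.
  rewrite /cintegral !null_set_integral //; [exact: measurable_int c2|exact: measurable_int c1].
left; rewrite -ce /= (_ : 0 = (0%:C)%C) // ltcR; apply: fine_gt0.
by rewrite muT andbT lt0e mupos measure_ge0.
Qed.
End Moment.

Lemma fin_bound (A : Type) (K : set A) (g : A -> nat) :
  finite_set K -> exists M, forall k, K k -> (g k <= M)%N.
Proof.
move=> /(finite_image g) /finite_seqP [sS hS].
exists (\max_(x <- sS) x)%N => k Kk.
have : [set` sS] (g k) by rewrite -hS; exists k.
by move=> /= gin; apply: (@leq_bigmax_seq _ sS xpredT id (g k)).
Qed.

Lemma enc_inj (B : nat) : forall n (k k' : 'I_n -> nat),
  (forall i, k i < B)%N -> (forall i, k' i < B)%N ->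
  (\sum_(i < n) B ^ i * k i)%N = (\sum_(i < n) B ^ i * k' i)%N ->
  forall i, k i = k' i.
Proof.
elim=> [|n IH] k k' hk hk' e i; first by case: i.
have B0 : (0 < B)%N by apply: leq_ltn_trans (hk i).
have sp (f : 'I_n.+1 -> nat) : (\sum_(i < n.+1) B ^ i * f i =
   f ord0 + (\sum_(j < n) B ^ j * f (lift ord0 j)) * B)%N.
  rewrite big_ord_recl expn0 mul1n big_distrl /=; congr (_ + _).
  by apply: eq_bigr => j _; rewrite /bump /= add1n expnS -mulnA mulnC.
move: e; rewrite !sp => e.
have h0 : k ord0 = k' ord0.
  have := congr1 (modn^~ B) e => /=.
  by rewrite [in LHS]addnC [in RHS]addnC !modnMDl !modn_small.
have hX := congr1 (divn^~ B) e; move: hX => /=.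
rewrite [in LHS]addnC [in RHS]addnC !divnMDl // !divn_small // !addn0 => hX.
have hl := IH (fun j => k (lift ord0 j)) (fun j => k' (lift ord0 j))
  (fun j => hk _) (fun j => hk' _) hX.
by case: (unliftP ord0 i) => [j ->|->].
Qed.

Definition Pt (R : realType) (n B : nat) (w : R[i]) : Cn R n :=
  (\row_(i < n) cRe (w ^+ (B ^ i)%N), \row_(i < n) cIm (w ^+ (B ^ i)%N)).

Lemma monomial_Pt (R : realType) (n B : nat) (k : 'I_n -> nat) (w : R[i]) :
  monomial k (Pt R n B w) = w ^+ (\sum_(i < n) B ^ i * k i)%N.
Proof.
rewrite /monomial -prodrXr; apply: eq_bigr => i _.
rewrite /zcoord /= !mxE exprM; by case: (w ^+ (B ^ i)%N).
Qed.

Lemma construct (R : realType) (n : nat) (K : set ('I_n -> nat))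
  (s : ('I_n -> nat) -> R[i]) :
  finite_set K -> K (fun _ => 0%N) ->
  (0 < s (fun _ => 0%N) \/ (forall k, K k -> s k = 0)) ->
  exists mu : {measure set (CnB R n) -> \bar R},
    has_moments mu K s /\ compact_support mu.
Proof.
move=> hKfin hK0 [hpos|hz]; last first.
  exists (amu R n [::]); split; last exact: amu_compact.
  move=> k Kk; have [ci ce] := amu_moment R n [::] _ (cmeas_monomial k).
  by split => //; rewrite ce big_nil hz.
have [r r0 s0E] : exists2 r : R, (0 < r) & (s (fun _ => 0%N) = (r%:C)%C).
  case E: (s (fun _ => 0%N)) hpos => [a b]; rewrite ltcE /= => /andP [/eqP hb ha].
  by exists a => //; rewrite hb.
have [M1 hM1] := @fin_bound _ K (fun k : 'I_n -> nat => \max_(i < n) k i)%N hKfin.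
pose B := M1.+1.
have hB : forall k, K k -> forall i, (k i < B)%N.
  move=> k Kk i; rewrite ltnS.
  have h2 : (\max_(j < n) k j <= M1)%N := hM1 k Kk.
  exact: leq_trans (@leq_bigmax _ k i) h2.
pose enc (k : 'I_n -> nat) := (\sum_(i < n) B ^ i * k i)%N.
have [D hD] := @fin_bound _ K enc hKfin.
pose t (e : nat) : R[i] :=
  match pselect (exists k, K k /\ enc k = e) with
  | left h => ((r^-1)%:C)%C * s (proj1_sig (cid h))
  | right _ => 0 end.
have ht : forall k, K k -> t (enc k) = ((r^-1)%:C)%C * s k.
  move=> k Kk; rewrite /t; case: pselect => [h|nh]; last by exfalso; apply: nh; exists k.
  case: (cid h) => k' [Kk' ek'] /=; congr (_ * s _); apply: funext => i.
  exact: (@enc_inj B n k' k (hB _ Kk') (hB _ Kk) ek' i).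
have [L1 [L1p L1s L1m]] := onevar R D t.
pose Lf : seq ({nonneg R} * CnB R n) :=
  [seq (@NngNum _ `|r * x.1| (normr_ge0 _), (Pt R n B x.2 : CnB R n)) | x <- L1].
exists (amu R n Lf); split; last exact: amu_compact.
move=> k Kk; have [ci ce] := amu_moment R n Lf _ (cmeas_monomial k).
split => //; rewrite ce.
have -> : \sum_(x <- Lf) ((x.1%:num)%:C)%C * monomial k x.2 =
    ((r%:C)%C) * mom R L1 (enc k).
  rewrite /Lf big_map /mom mulr_sumr big_seq [RHS]big_seq; apply: eq_bigr => x xL /=.
  have hx : 0 <= x.1 by have := allP L1p x xL.
  rewrite monomial_Pt ger0_norm ?mulr_ge0 ?(ltW r0) //.
  by rewrite rmorphM mulrA.
case: (posnP (enc k)) => [e0|epos].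
  have kk0 : k = (fun _ => 0%N).
    apply: funext => i; apply: (@enc_inj B n k (fun _ => 0%N) (hB _ Kk) (hB _ hK0)).
    by rewrite -/(enc k) e0 big1 // => j _; rewrite muln0.
  rewrite e0 /mom (eq_bigr (fun x => (x.1%:C)%C)) => [|x _]; last by rewrite expr0 mulr1.
  by rewrite -rmorph_sum L1s rmorph1 mulr1 kk0 s0E.
rewrite L1m; last by rewrite epos hD.
by rewrite ht // mulrA -rmorphM mulfV ?gt_eqF // rmorph1 mul1r.
Qed.

Theorem theorem2p1 (R : realType) (n : nat) (hn : (0 < n)%N)
    (K : set ('I_n -> nat)) (hKfin : finite_set K) (hK0 : K (fun _ => 0%N))
    (s : ('I_n -> nat) -> R[i]) :
  ((exists mu : {measure set (CnB R n) -> \bar R}, has_moments mu K s) <->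
     (0 < s (fun _ => 0%N) \/ (forall k, K k -> s k = 0)))
  /\
  ((0 < s (fun _ => 0%N) \/ (forall k, K k -> s k = 0)) ->
     exists mu : {measure set (CnB R n) -> \bar R},
       has_moments mu K s /\ compact_support mu).
Proof.
have HC := @construct R n K s hKfin hK0.
split; last exact: HC.
split; first by move=> [mu H]; exact: (@forward R n K s mu hK0 H).
by move=> h; have [mu [hm _]] := HC h; exists mu.
Qed.
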